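(* Let $A, N_1,\dots,N_m\in\mathbb R^{n\times n}$, $u=(u_1,\dots,u_m)^T\in L^2$, $s\ge 0$ and $x_0\in\mathbb R^n$. Let $x(t)$, $t\ge s$, denote the solution to the homogeneous bilinear equation $$\dot x(t)=Ax(t)+\sum_{k=1}^m N_k x(t)u_k(t),\qquad x(s)=x_0.$$ Then $X(t):=x(t)x^T(t)$, $t\ge s$, satisfies $X(s)=x_0x_0^T$ and the matrix differential inequality $$\dot X(t)\le AX(t)+X(t)A^T+\sum_{k=1}^m N_kX(t)N_k^T+X(t)\|u^0(t)\|_2^2 .$$
   Context: For symmetric matrices $K,L$, $K\le L$ means $L-K$ is symmetric positive semidefinite. $L^2$ is the set of $u:[0,\infty)\to\mathbb R^m$ with $\int_0^\infty u^T(s)u(s)\,ds<\infty$. The vector $u^0=(u^0_1,\dots,u^0_m)^T$ is defined by $u^0_k\equiv 0$ if $N_k=0$ and $u^0_k=u_k$ otherwise. *)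

(* Defs.v *)
From HB Require Import structures.
From mathcomp Require Import all_boot all_order all_algebra.
From mathcomp Require Import all_classical all_reals all_analysis.
Set Implicit Arguments. Unset Strict Implicit. Unset Printing Implicit Defensive.
Import Order.TTheory GRing.Theory Num.Theory.
Import numFieldNormedType.Exports.
Local Open Scope classical_set_scope.
Local Open Scope ring_scope.

(* K <= L in the Loewner order: L - K symmetric positive semidefinite.
   We define "M is symmetric positive semidefinite". *)
Definition psd (R : realType) (n : nat) (M : 'M[R]_n) : Prop :=
  M^T = M /\ forall v : 'cV[R]_n, 0 <= (v^T *m M *m v) 0 0.

Definition L2 (R : realType) (m : nat) (u : 'I_m -> R -> R) : Prop :=
  (forall k, measurable_fun [set` `[(0:R), +oo[%R] (u k)) /\
  (\int[lebesgue_measure]_(t in [set` `[(0:R), +oo[%R])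
      ((\sum_(k < m) u k t ^+ 2)%:E) < +oo)%E.

(* ||u^0(t)||_2^2, where u^0_k = 0 if N_k = 0 and u^0_k = u_k otherwise. *)
Definition u0norm2 (R : realType) (n m : nat) (N : 'I_m -> 'M[R]_n)
  (u : 'I_m -> R -> R) (t : R) : R :=
  \sum_(k < m | N k != 0) u k t ^+ 2.

(* Main.v *)
Require Import Defs.
From HB Require Import structures.
From mathcomp Require Import all_boot all_order all_algebra.
From mathcomp Require Import all_classical all_reals all_analysis.
Import Order.TTheory GRing.Theory Num.Theory.
Import numFieldNormedType.Exports.
Local Open Scope classical_set_scope.
Local Open Scope ring_scope.

Lemma psd_sum_outer (R : realType) (n m : nat) (w : 'I_m -> 'cV[R]_n) :
  psd (\sum_(k < m) w k *m (w k)^T).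
Proof.
split.
  rewrite (raddf_sum (@trmx R n n)). apply: eq_bigr => k _ /=. by rewrite trmx_mul trmxK.
move=> v; rewrite mulmx_sumr mulmx_suml summxE; apply: sumr_ge0 => k _.
have -> : v^T *m (w k *m (w k)^T) *m v = (v^T *m w k) *m (v^T *m w k)^T.
  by rewrite trmx_mul trmxK !mulmxA.
rewrite mxE; apply: sumr_ge0 => l _; rewrite !mxE; (rewrite -expr2; exact: sqr_ge0).
Qed.
Lemma gen (V : zmodType) (P Q S U T : V) : P+Q+S+U-(P+Q+T) = S - T + U.
Proof.
set PQ := P + Q. rewrite opprD addrA (addrAC (PQ + S)) (addrAC PQ) subrr add0r.
by rewrite addrAC.
Qed.

Lemma outer_k (R : realType) (n : nat) (M : 'M[R]_n) (a : 'cV[R]_n) (c : R) :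
  let X := a *m a^T in
  (M *m a + c *: a) *m (M *m a + c *: a)^T =
  M *m X *m M^T + c *: (M *m X + X *m M^T) + (c ^+ 2) *: X.
Proof.
move=> X.
have -> : (M *m a + c *: a)^T = a^T *m M^T + c *: a^T.
  by rewrite linearD /= trmx_mul; congr (_ + _); rewrite linearZ.
rewrite mulmxDl !mulmxDr.
rewrite -!scalemxAl -!scalemxAr scalerA -expr2 /X !mulmxA.
by rewrite scalerDr !addrA.
Qed.

Lemma key (R : realType) (n m : nat) (A : 'M[R]_n) (N : 'I_m -> 'M[R]_n)
  (a : 'cV[R]_n) (c : 'I_m -> R) :
  let X := a *m a^T in
  let y := A *m a + \sum_(k < m) c k *: (N k *m a) in
  A *m X + X *m A^T + \sum_(k < m) (N k *m X *m (N k)^T)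
    + (\sum_(k < m | N k != 0) c k ^+ 2) *: X - (y *m a^T + a *m y^T)
  = \sum_(k < m) (N k *m a - (if N k == 0 then 0 else c k) *: a)
        *m (N k *m a - (if N k == 0 then 0 else c k) *: a)^T.
Proof.
move=> X y.
have -> : y *m a^T + a *m y^T = A *m X + X *m A^T +
   \sum_(k < m) c k *: (N k *m X + X *m (N k)^T).
  rewrite /y linearD /= (raddf_sum (@trmx R n 1)) /= mulmxDl mulmxDr mulmx_suml mulmx_sumr.
  rewrite /X trmx_mul !mulmxA -!addrA; congr (_ + _); rewrite addrCA; congr (_ + _).
  rewrite -big_split /=; apply: eq_bigr => k _.
  by rewrite linearZ /= -scalemxAl -scalemxAr trmx_mul scalerDr !mulmxA.
rewrite gen.
have -> : \sum_(k < m) (N k *m a - (if N k == 0 then 0 else c k) *: a)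
        *m (N k *m a - (if N k == 0 then 0 else c k) *: a)^T =
  \sum_(k < m) (N k *m X *m (N k)^T - c k *: (N k *m X + X *m (N k)^T)
     + (if N k != 0 then c k ^+ 2 else 0) *: X).
  apply: eq_bigr => k _; rewrite -scaleNr outer_k sqrrN scaleNr.
  case: eqP => [->|_] /=; last by [].
  by rewrite /X !trmx0 !mul0mx !mulmx0 ?addr0 ?scaler0 ?scale0r ?subr0 ?oppr0 ?addr0 ?expr0n /= ?scale0r ?addr0.
rewrite big_split /= sumrB scaler_suml; congr (_ + _).
rewrite big_mkcond /=; apply: eq_bigr => k _.
by case: ifP => _ //; rewrite scale0r.
Qed.

Theorem lemma2p2 (R : realType) (n m : nat) (A : 'M[R]_n)
  (N : 'I_m -> 'M[R]_n) (u : 'I_m -> R -> R) (s : R) (x0 : 'cV[R]_n)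
  (x : R -> 'cV[R]_n) :
  L2 u -> 0 <= s -> x s = x0 ->
  let X := fun t => x t *m (x t)^T in
  X s = x0 *m x0^T /\
  forall t, s <= t ->
    (forall i, derivable (fun r => x r i 0) t 1 /\
       'D_1 (fun r => x r i 0) t
         = (A *m x t + \sum_(k < m) u k t *: (N k *m x t)) i 0) ->
    (forall i j, derivable (fun r => X r i j) t 1) /\
    psd (A *m X t + X t *m A^T + \sum_(k < m) (N k *m X t *m (N k)^T)
         + u0norm2 N u t *: X t
         - \matrix_(i, j) 'D_1 (fun r => X r i j) t).
Proof.
move=> _ _ xs X; split; first by rewrite /X xs.
move=> t _ hx; rewrite /X.
have eX i j : (fun r => (x r *m (x r)^T) i j) = ((fun r => x r i 0) * (fun r => x r j 0))%R.
  by apply: funext => r; rewrite !mxE big_ord1 mxE.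
have dX i j : derivable (fun r => (x r *m (x r)^T) i j) t 1.
  by have := derivableM (hx i).1 (hx j).1; rewrite -eX.
split => //.
set y := A *m x t + \sum_(k < m) u k t *: (N k *m x t).
have -> : \matrix_(i, j) 'D_1 (fun r => (x r *m (x r)^T) i j) t = y *m (x t)^T + x t *m y^T.
  apply/matrixP => i j; have := deriveM (hx i).1 (hx j).1; rewrite -eX => H.
  rewrite mxE; apply: (etrans H).
  rewrite (hx i).2 (hx j).2 -/y; clearbody y; rewrite !mxE !big_ord1 !mxE /=.
  by rewrite addrC [y i _ * _]mulrC.
rewrite /u0norm2 /y key.
exact: psd_sum_outer.
Qed.
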